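(* For all integers $n\ge 4$ and $2\le k\le n/2$, there exists a feasible simple homogeneous PV graph $\vec G_R$ with $n$ sites and $k$ carriers such that $$\mathcal M(\vec G_R)\ >\ \tfrac18\,k\,n\,(n-8).$$ (This holds even though the agent knows $\vec G_R$ and $k$ and has unlimited memory.)
   Context: A PV (periodically varying) system consists of a finite set $S$ of $n$ sites and a set $C$ of $k\le n$ carriers. Each carrier $c$ has a route $\pi(c)=\langle x_0,\dots,x_{p(c)-1}\rangle$, a finite sequence of sites of length $p(c)\ge1$ called its period; $\pi(c)[j]=x_{j\bmod p(c)}$. At each time $t\in\mathbb N$ carrier $c$ is at $\pi(c)[t]$ and moves to $\pi(c)[t+1]$. The PV graph $\vec G_R$ is the directed edge-labelled multigraph on $S$ with edges $(x_i,x_{i+1},i)$, $0\le i<p(c)$, for every carrier. The system is homogeneous if all $p(c)$ are equal, heterogeneous otherwise. A route is simple if $\pi(c)[i]\ne\pi(c)[i+1]$ for all $i$ and, whenever $\pi(c)[i]=\pi(c)[j]$ with $0\le i<j<p(c)$, then $\pi(c)[i+1]\ne\pi(c)[j+1]$ (no self-loops and no repeated directed edge within one period); a PV graph is simple if all its routes are simple. An exploring agent is injected at time $0$ at a site of $\mathrm{start}(\vec G_R)=\{\pi(c)[0]:c\in C\}$; if at time $t$ it is at site $x$ it must either ride one step with some carrier $c$ with $\pi(c)[t]=x$ (one move) or halt; it cannot wait. A strategy solves PVG-Exploration of $\vec G_R$ if from every injection site the agent visits all sites and halts in finite time. $\vec G_R$ is feasible if from the starting point of every carrier some realizable walk visits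 all sites. For feasible $\vec G_R$, $\mathcal M(\vec G_R)$ denotes the minimum, over all deterministic strategies solving PVG-Exploration of $\vec G_R$ (which may use full knowledge of $\vec G_R$ and unlimited memory), of the maximum over injection sites of the number of moves performed. *)

(* Defs.v *)
From mathcomp Require Import all_boot all_order all_algebra.
Set Implicit Arguments. Unset Strict Implicit. Unset Printing Implicit Defensive.

Section PV.
Variables (S C : finType).

(* A PV system with sites S and carriers C.  Carrier c has period
   [per c] and route <rt c 0, ..., rt c (per c - 1)>; values of
   [rt c j] for j >= per c are irrelevant (never used). *)
Record PVsys := PVSys { per : C -> nat; rt : C -> nat -> S }.

Variable R : PVsys.

Definition pos (c : C) (j : nat) : S := rt R c (j %% per R c).

Definition well_formed : Prop := forall c, 0 < per R c.

Definition homogeneous : Prop := forall c c', per R c = per R c'.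

(* simple route: no self-loop and no repeated directed edge in a period *)
Definition simple_route (c : C) : Prop :=
  (forall i, i < per R c -> pos c i != pos c i.+1) /\
  (forall i j, i < j -> j < per R c -> pos c i = pos c j ->
       pos c i.+1 != pos c j.+1).

Definition simple_PV : Prop := forall c, simple_route c.

Definition start : {set S} := [set pos c 0 | c : C].

(* A walk is the sequence of carriers ridden, one move per time step;
   the agent at site x at time t may ride c only if pi(c)[t] = x, and
   then it is at pi(c)[t+1] at time t+1. *)
Fixpoint valid_from (x : S) (t : nat) (cs : seq C) : bool :=
  if cs is c :: cs' then (pos c t == x) && valid_from (pos c t.+1) t.+1 cs'
  else true.

Fixpoint trace (x : S) (t : nat) (cs : seq C) : seq S :=
  x :: (if cs is c :: cs' then trace (pos c t.+1) t.+1 cs' else [::]).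

Definition explores (s : S) (cs : seq C) : Prop :=
  valid_from s 0 cs /\ forall y : S, y \in trace s 0 cs.

Definition feasible : Prop := forall c, exists cs, explores (pos c 0) cs.

(* A deterministic strategy with full knowledge of G_R and unlimited memory
   determines, for each injection site, the finite walk performed before
   halting. *)
Definition strategy := S -> seq C.

Definition solves (sigma : strategy) : Prop :=
  forall s, s \in start -> explores s (sigma s).

Definition cost (sigma : strategy) : nat := \max_(s in start) size (sigma s).

End PV.

(* Main.v *)
From Stdlib Require Import Lia.
Require Import Defs.
From mathcomp Require Import all_boot all_order all_algebra.
Set Implicit Arguments. Unset Strict Implicit. Unset Printing Implicit Defensive.

Ltac toP := intros; repeat match goal with
 | H : is_true (leq _ _) |- _ => move/leP in H
 | H : is_true (@eq_op Datatypes_nat__canonical__eqtype_Equality _ _) |- _ => move/eqP in H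
 | H : is_true (negb (@eq_op Datatypes_nat__canonical__eqtype_Equality _ _)) |- _ => move/eqP in H
 | H : is_true (_ && _) |- _ => case/andP: H => ? ?
 | H : _ /\ _ |- _ => destruct H
 | H : _ \/ _ |- _ => destruct H
 | H : _ = false |- _ => move/negbT in H
 | H : is_true (~~ (_ && _)) |- _ => rewrite negb_and in H
 | H : is_true (_ || _) |- _ => case/orP: H => ?
 | H : is_true (~~ (leq _ _)) |- _ => rewrite -ltnNge in H
 | |- is_true (_ && _) => apply/andP; split
 | |- _ /\ _ => split
 | |- is_true (leq _ _) => apply/leP
 | |- is_true (@eq_op _ _ _) => apply/eqP
 | |- is_true (negb (@eq_op _ _ _)) => apply/eqP
 end; change addn with Nat.add in *; change subn with Nat.sub in *; change muln with Nat.mul in *.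
Ltac slia := toP; lia.

Section Walks.
Variables (S C : finType) (R : PVsys S C).

Fixpoint fin (x : S) (t : nat) (cs : seq C) : S :=
  if cs is c :: cs' then fin (pos R c t.+1) t.+1 cs' else x.

Lemma valid_cat x t cs1 cs2 :
  valid_from R x t (cs1 ++ cs2) =
  valid_from R x t cs1 && valid_from R (fin x t cs1) (t + size cs1) cs2.
Proof.
elim: cs1 x t => [|c cs IH] x t /=; first by rewrite addn0.
by rewrite IH addSnnS andbA.
Qed.

Lemma trace_catl x t cs1 cs2 y : y \in trace R x t cs1 -> y \in trace R x t (cs1 ++ cs2).
Proof.
elim: cs1 x t => [|c cs IH] x t /=.
  by rewrite !inE => /eqP ->; case: cs2 => [|? ?] /=; rewrite inE eqxx.
by rewrite !inE => /orP [->//|/IH ->]; rewrite orbT.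
Qed.

Lemma trace_catr x t cs1 cs2 y :
  y \in trace R (fin x t cs1) (t + size cs1) cs2 -> y \in trace R x t (cs1 ++ cs2).
Proof.
elim: cs1 x t => [|c cs IH] x t /=; first by rewrite addn0.
by rewrite addnS -addSn => /IH H; rewrite inE H orbT.
Qed.

Lemma ride_valid c t L : valid_from R (pos R c t) t (nseq L c).
Proof. by elim: L t => [|L IH] t //=; rewrite eqxx IH. Qed.

Lemma ride_fin c t L : fin (pos R c t) t (nseq L c) = pos R c (t + L).
Proof. by elim: L t => [|L IH] t /=; rewrite ?addn0 // IH addSn addnS. Qed.

Lemma ride_mem c t L i : i <= L -> pos R c (t + i) \in trace R (pos R c t) t (nseq L c).
Proof.
elim: L t i => [|L IH] t i /=.
  by rewrite leqn0 => /eqP ->; rewrite addn0 inE.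
case: i => [|i] Hi; first by rewrite addn0 inE eqxx.
by rewrite inE -addSnnS IH ?orbT.
Qed.

Lemma trace_time x t cs y : y \in trace R x t cs ->
  y = x \/ exists2 i, 0 < i <= size cs & y = fin x t (take i cs).
Proof.
elim: cs x t => [|c cs IH] x t /=; first by rewrite inE => /eqP ->; left.
rewrite inE => /orP [/eqP ->|/IH [->|[i Hi ->]]]; first by left.
  by right; exists 1; rewrite //= take0.
by right; exists i.+1 => //; case/andP: Hi => H1 H2; rewrite /= ltnS H2.
Qed.

Lemma valid_cons x t c cs :
  valid_from R x t (c :: cs) = (pos R c t == x) && valid_from R (pos R c t.+1) t.+1 cs.
Proof. by []. Qed.

Lemma fin_cons x t c cs : fin x t (c :: cs) = fin (pos R c t.+1) t.+1 cs.
Proof. by []. Qed.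

Lemma fin_cat x t cs1 cs2 :
  fin x t (cs1 ++ cs2) = fin (fin x t cs1) (t + size cs1) cs2.
Proof.
elim: cs1 x t => [|c cs IH] x t /=; first by rewrite addn0.
by rewrite IH addnS -addSn.
Qed.

End Walks.

Lemma inv_trace (S C : finType) (R : PVsys S C) (P : nat -> S -> Prop) :
  (forall t x c, P t x -> pos R c t = x -> P t.+1 (pos R c t.+1)) ->
  forall cs x t, valid_from R x t cs -> P t x ->
  forall y, y \in trace R x t cs -> exists t', t <= t' <= t + size cs /\ P t' y.
Proof.
move=> Hstep; elim=> [|c cs IH] x t /=.
  by move=> _ Hx y; rewrite inE => /eqP ->; exists t; rewrite addn0 leqnn.
case/andP=> /eqP Hc Hv Hx y; rewrite inE => /orP [/eqP ->|Hy].
  by exists t; rewrite leqnn leq_addr.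
have [t' [Ht' Pt']] := IH _ _ Hv (Hstep _ _ _ Hx Hc) y Hy.
exists t'; split=> //; case/andP: Ht' => H1 H2.
by rewrite (ltnW H1) /= addnS -addSn.
Qed.

Definition rbase (m t : nat) : nat :=
  ((t %% (2 * m)) %/ 2 + odd (t %% (2 * m)) * (t %/ (2 * m) + 2)) %% m.

Lemma r_gen m q u : u < 2 * m ->
  rbase m (q * (2 * m) + u) = (u %/ 2 + odd u * (q + 2)) %% m.
Proof.
move=> Hu; have Hm : 0 < 2 * m by apply: leq_ltn_trans Hu.
by rewrite /rbase modnMDl divnMDl // (modn_small Hu) (divn_small Hu) addn0.
Qed.

Lemma r_even m q j : j < m -> rbase m (q * (2 * m) + 2 * j) = j.
Proof.
move=> Hj; rewrite r_gen; last by rewrite ltn_pmul2l.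
by rewrite oddM /= mul0n addn0 mulKn // modn_small.
Qed.

Lemma r_odd m q j : j < m -> rbase m (q * (2 * m) + (2 * j).+1) = (j + (q + 2)) %% m.
Proof.
move=> Hj; rewrite r_gen; last by slia.
rewrite -addn1 oddD oddM /= mul1n mulnC divnMDl // addn0.
by [].
Qed.

Lemma decomp m t : 0 < m -> exists q j, j < m /\
  (t = q * (2 * m) + 2 * j \/ t = q * (2 * m) + (2 * j).+1).
Proof.
move=> Hm; exists (t %/ (2 * m)), ((t %% (2 * m)) %/ 2).
have Hu : t %% (2 * m) < 2 * m by rewrite ltn_pmod // muln_gt0.
have E1 := divn_eq t (2 * m).
have E2 := divn_eq (t %% (2 * m)) 2.
have H2 : (t %% (2 * m)) %% 2 < 2 by rewrite ltn_pmod.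
move: E1 E2 H2 Hu.
set u := t %% (2 * m); set q := t %/ (2 * m); set j := u %/ 2; set b := u %% 2.
move=> E1 E2 H2 Hu; split; first by slia.
case: b E2 H2 => [|[|b]] E2 H2; [left|right|]; slia.
Qed.

Lemma q_bound m D q u t : t = q * (2 * m) + u -> t < D * (2 * m) -> q < D.
Proof.
move=> -> H; rewrite -(ltn_pmul2r (m := 2 * m)); last first.
  by have := leq_ltn_trans (leq0n _) H; rewrite muln_gt0 => /andP[].
exact: leq_ltn_trans (leq_addr _ _) H.
Qed.

Lemma modcancel a x y m : (a + x) %% m = (a + y) %% m -> x %% m = y %% m.
Proof. by move/eqP; rewrite eqn_modDl => /eqP. Qed.

Lemma small_mod_inj a b m : 0 < a <= m -> 0 < b <= m -> a %% m = b %% m -> a = b.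
Proof.
move=> /andP[Ha0 Ha] /andP[Hb0 Hb].
have Ea : a %% m = if a < m then a else 0.
  case: ltnP => H; first by rewrite modn_small.
  have -> : a = m by slia. by rewrite modnn.
have Eb : b %% m = if b < m then b else 0.
  case: ltnP => H; first by rewrite modn_small.
  have -> : b = m by slia. by rewrite modnn.
rewrite Ea Eb; case: ltnP => H1; case: ltnP => H2 E; slia.
Qed.

Lemma r_succ_even m D q j : 0 < m -> q < D -> j < m ->
  rbase m ((q * (2 * m) + 2 * j).+1 %% (D * (2 * m))) = (j + (q + 2)) %% m.
Proof.
move=> Hm HqD Hj.
have Hlt : (q * (2 * m) + 2 * j).+1 < D * (2 * m).
  have : q.+1 * (2 * m) <= D * (2 * m) by rewrite leq_mul2r HqD orbT.
  rewrite mulSn => ?; slia.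
by rewrite (modn_small Hlt) -addnS r_odd.
Qed.

Lemma r_succ_odd m D q j : 0 < m -> q < D -> j < m ->
  rbase m ((q * (2 * m) + (2 * j).+1).+1 %% (D * (2 * m))) = j.+1 %% m.
Proof.
move=> Hm HqD Hj.
case: (ltnP j.+1 m) => Hj1.
  have Hlt : (q * (2 * m) + (2 * j).+1).+1 < D * (2 * m).
    have : q.+1 * (2 * m) <= D * (2 * m) by rewrite leq_mul2r HqD orbT.
    rewrite mulSn => ?; slia.
  rewrite (modn_small Hlt) (modn_small Hj1).
  have -> : (q * (2 * m) + (2 * j).+1).+1 = q * (2 * m) + 2 * j.+1 by slia.
  by rewrite r_even.
have {}Hj1 : j.+1 = m by slia.
rewrite Hj1 modnn.
have -> : (q * (2 * m) + (2 * j).+1).+1 = q.+1 * (2 * m) + 2 * 0.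
  rewrite mulSn; slia.
case: (ltnP q.+1 D) => Hq.
  have Hlt : q.+1 * (2 * m) + 2 * 0 < D * (2 * m).
    rewrite muln0 addn0 ltn_pmul2r //; slia.
  by rewrite (modn_small Hlt) r_even.
have -> : q.+1 = D by slia.
by rewrite muln0 addn0 modnn; have := @r_even m 0 0 Hm; rewrite mul0n muln0.
Qed.

Lemma base_simple m D t1 t2 : 0 < D -> (2 * D).+1 < m ->
  t1 < D * (2 * m) -> t2 < D * (2 * m) ->
  rbase m t1 = rbase m t2 ->
  rbase m (t1.+1 %% (D * (2 * m))) = rbase m (t2.+1 %% (D * (2 * m))) -> t1 = t2.
Proof.
move=> HD Hm H1 H2.
have Hm0 : 0 < m by slia.
have [q1 [j1 [Hj1 E1]]] := decomp t1 Hm0.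
have [q2 [j2 [Hj2 E2]]] := decomp t2 Hm0.
have Hq1 : q1 < D by case: E1 => E1; apply: q_bound E1 H1.
have Hq2 : q2 < D by case: E2 => E2; apply: q_bound E2 H2.
case: E1 => ->; case: E2 => ->.
- rewrite !r_even // => Ej; subst j2; rewrite !r_succ_even //.
  move/modcancel; rewrite !modn_small; [move=> Eq; slia|slia|slia].
- rewrite r_even // r_odd // r_succ_even // r_succ_odd // => Ea Eb.
  have : (j2.+1 + (q1 + q2 + 3)) %% m = (j2.+1 + 0) %% m.
    rewrite addn0 -Eb Ea modnDml; congr (_ %% _); slia.
  move/modcancel; rewrite mod0n modn_small; slia.
- rewrite r_even // r_odd // r_succ_even // r_succ_odd // => Ea Eb.
  have : (j1.+1 + (q1 + q2 + 3)) %% m = (j1.+1 + 0) %% m.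
    rewrite addn0 Eb -Ea modnDml; congr (_ %% _); slia.
  move/modcancel; rewrite mod0n modn_small; slia.
- rewrite !r_odd // !r_succ_odd // => Ea Eb.
  have Ej : j1 = j2.
    have : j1.+1 = j2.+1 by apply: small_mod_inj Eb; slia.
    by case.
  subst j2; move: Ea => /modcancel; rewrite !modn_small; [move=> Eq; slia|slia|slia].
Qed.

Lemma base_noloop m D t : 0 < D -> (2 * D).+1 < m -> t < D * (2 * m) ->
  rbase m t != rbase m (t.+1 %% (D * (2 * m))).
Proof.
move=> HD Hm H1; apply/eqP.
have Hm0 : 0 < m by slia.
have [q1 [j1 [Hj1 E1]]] := decomp t Hm0.
have Hq1 : q1 < D by case: E1 => E1; apply: q_bound E1 H1.
case: E1 => ->.
- rewrite r_even // r_succ_even // => E.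
  have : (j1 + (q1 + 2)) %% m = (j1 + 0) %% m by rewrite addn0 -E modn_small.
  move/modcancel; rewrite mod0n modn_small; slia.
- rewrite r_odd // r_succ_odd // => E.
  have : (j1 + (q1 + 2)) %% m = (j1 + 1) %% m by rewrite addn1.
  move/modcancel; rewrite !modn_small; slia.
Qed.

Definition mm N K := N - K.
Definition DD N K := (mm N K - 2) %/ 2.
Definition pp N K := DD N K * (2 * mm N K).

Definition rtn N K i t :=
  if (i.+1 < K) && (t == pp N K - 1 - i) then mm N K + i
  else if (0 < i) && (t == pp N K - i) then mm N K + i - 1
  else if (i == K - 1) && (t == pp N K - K) then mm N K + K - 1
  else (rbase (mm N K) t + i) %% mm N K.

Lemma params N K : 9 <= N -> 2 <= K -> K.*2 <= N ->
  0 < DD N K /\ (2 * DD N K).+1 < mm N K /\ K <= mm N K /\ mm N K + K = N /\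
      2 * mm N K <= pp N K /\ N * (N - 8) < 8 * (pp N K - 1).
Proof.
move=> H9 HK HK2; rewrite -muln2 in HK2.
have E := divn_eq (mm N K - 2) 2.
have Hr : (mm N K - 2) %% 2 < 2 by rewrite ltn_pmod.
rewrite /pp -/(DD N K) in E *.
set D := DD N K in E *.
rewrite /mm in E Hr *.
clearbody D. move: E Hr; set r := _ %% 2 => E Hr. clearbody r.
split; [slia|split; [slia|split; [slia|split; [slia|split]]]].
- by rewrite leq_pmull //; slia.
- have H3 : N - K - 3 <= 2 * D by slia.
  have : (N - K - 3) * (N - K) <= D * (2 * (N - K)).
    by rewrite mulnA [D * 2]mulnC leq_mul2r H3 orbT.
  move=> H4. toP. nia.
Qed.

Lemma jmod p j : 0 < j -> j < p -> (j * (p - 1)) %% p = p - j.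
Proof.
move=> H1 H2.
have -> : j * (p - 1) = (j - 1) * p + (p - j) by toP; nia.
by rewrite modnMDl modn_small //; slia.
Qed.

Lemma mod_step p j t : j < p -> j * (p - 1) <= t -> t %% p = p - 1 - j ->
  j.+1 * (p - 1) <= t.
Proof.
move=> Hj Ht Hm.
have E := divn_eq t p; rewrite Hm in E.
move: E Ht; set q := t %/ p => E Ht.
case: (ltnP q j) => Hq.
  have : q.+1 * p <= j * p by rewrite leq_mul2r Hq orbT.
  toP; nia.
have : j * p <= q * p by rewrite leq_mul2r Hq orbT.
toP; nia.
Qed.

Ltac rtn_cases := rewrite /rtn; repeat (case: ifP => ?).

Section Rtn.
Variables (n' k' : nat).
Local Notation N := n'.+1.
Local Notation K := k'.+1.
Hypotheses (H9 : 9 <= N) (HK : 2 <= K) (HK2 : K.*2 <= N).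

Local Notation m := (mm N K).
Local Notation p := (pp N K).
Local Notation r := (rtn N K).

Lemma P1 : 1 < K /\ 0 < DD N K /\ (2 * DD N K).+1 < m /\ K <= m /\ m + K = N /\
      2 * m <= p /\ N * (N - 8) < 8 * (p - 1).
Proof. by split => //; exact: params. Qed.

Lemma Kp : K < p. Proof. move: P1 => ?; slia. Qed.

Lemma rtn_W i t : i.+1 < K -> t = p - 1 - i -> r i t = m + i.
Proof. by move=> Hi ->; rewrite /rtn Hi eqxx. Qed.

Lemma rtn_W' i t : 0 < i -> i < K -> t = p - i -> r i t = m + i - 1.
Proof. have := Kp; move=> ? ? ? ->; rtn_cases; slia. Qed.

Lemma rtn_Z t : t = p - K -> r (K - 1) t = m + K - 1.
Proof. have := Kp; move=> ? ->; rtn_cases; slia. Qed.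

Lemma rtn_X i t : i < K -> t < p - 1 - i -> r i t = (rbase m t + i) %% m.
Proof. have := Kp; move=> ? ? ?; rtn_cases; slia. Qed.

Lemma m_pos : 0 < m. Proof. move: P1 => ?; slia. Qed.

Lemma rtn_val i t : i < K -> t < p ->
  (i.+1 < K /\ t = p - 1 - i /\ r i t = m + i) \/
  (0 < i /\ t = p - i /\ r i t = m + i - 1) \/
  (i = K - 1 /\ t = p - K /\ r i t = m + K - 1) \/
  (r i t < m /\ r i t = (rbase m t + i) %% m).
Proof.
move=> Hi Ht; have Hm := m_pos.
rewrite /rtn; case: ifP => H1; first by left; toP; lia.
case: ifP => H2; first by right; left; toP; lia.
case: ifP => H3; first by right; right; left; toP; lia.
by right; right; right; split; rewrite // ltn_pmod.
Qed.

Lemma spec_inj i t1 t2 : i < K -> t1 < p -> t2 < p -> r i t1 = r i t2 ->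
  m <= r i t1 -> t1 = t2.
Proof.
move=> Hi H1 H2 E Hm.
have := rtn_val Hi H1; have := rtn_val Hi H2.
move: E Hm; move: (r i t1) (r i t2) => x y; slia.
Qed.

Lemma Xval i t : i < K -> t < p -> r i t < m -> r i t = (rbase m t + i) %% m.
Proof. move=> Hi Ht; case: (rtn_val Hi Ht); slia. Qed.

Lemma coincide a b t : a < K -> b < K -> a != b -> t < p -> r a t = r b t ->
  (b = a.+1 /\ t = p - 1 - a) \/ (a = b.+1 /\ t = p - 1 - b).
Proof.
move=> Ha Hb Hab Ht E.
case: (ltnP (r a t) m) => Hx.
  have Hy : r b t < m by rewrite -E.
  move: E; rewrite (Xval Ha Ht Hx) (Xval Hb Ht Hy) => /modcancel.
  have := P1 => ?.
  rewrite !modn_small; [move=> E; move: Hab; rewrite E eqxx //|slia|slia].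
have := rtn_val Ha Ht; have := rtn_val Hb Ht.
move: E Hx; move: (r a t) (r b t) => x y; slia.
Qed.

Lemma rtn_lt i t : i < K -> t < p -> r i t < N.
Proof. move=> Hi Ht; have := P1; have := rtn_val Hi Ht; slia. Qed.

Lemma succ_mod_inj i j : i < p -> j < p -> i.+1 %% p = j.+1 %% p -> i = j.
Proof.
move=> Hi Hj.
have Ei : i.+1 %% p = if i.+1 == p then 0 else i.+1.
  case: eqP => [->|/eqP H]; first by rewrite modnn.
  by rewrite modn_small // ltn_neqAle H Hi.
have Ej : j.+1 %% p = if j.+1 == p then 0 else j.+1.
  case: eqP => [->|/eqP H]; first by rewrite modnn.
  by rewrite modn_small // ltn_neqAle H Hj.
rewrite Ei Ej; case: eqP => ?; case: eqP => ?; slia.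
Qed.

Lemma rb_eq i t1 t2 : i < K -> t1 < p -> t2 < p -> r i t1 = r i t2 -> r i t1 < m ->
  rbase m t1 = rbase m t2.
Proof.
move=> Hi H1 H2 E Hx.
have Hy : r i t2 < m by rewrite -E.
move: E; rewrite (Xval Hi H1 Hx) (Xval Hi H2 Hy) ![_ + i]addnC => /modcancel.
by rewrite !modn_small // /rbase ltn_pmod //; exact: m_pos.
Qed.

Lemma rtn_simple1 i t : i < K -> t < p -> r i t != r i (t.+1 %% p).
Proof.
move=> Hi Ht; have Hp := Kp; have [_ [HD [Hm _]]] := P1.
have Ht' : t.+1 %% p < p by rewrite ltn_pmod //; slia.
apply/eqP => E; case: (ltnP (r i t) m) => Hx.
  have := rb_eq Hi Ht Ht' E Hx; apply/eqP; exact: base_noloop.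
have := spec_inj Hi Ht Ht' E Hx.
have Ei : t.+1 %% p = if t.+1 == p then 0 else t.+1.
  case: eqP => [->|/eqP H]; first by rewrite modnn.
  by rewrite modn_small // ltn_neqAle H Ht.
rewrite Ei; case: eqP => ?; slia.
Qed.

Lemma rtn_simple2 i t1 t2 : i < K -> t1 < t2 -> t2 < p -> r i t1 = r i t2 ->
  r i (t1.+1 %% p) != r i (t2.+1 %% p).
Proof.
move=> Hi H12 H2 E; have Hp := Kp; have [_ [HD [Hm _]]] := P1.
have H1 : t1 < p by apply: ltn_trans H2.
have Hne : t1 <> t2 by move=> E'; rewrite E' ltnn in H12.
have H1' : t1.+1 %% p < p by rewrite ltn_pmod //; slia.
have H2' : t2.+1 %% p < p by rewrite ltn_pmod //; slia.
apply/eqP => E'.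
case: (ltnP (r i t1) m) => Hx; last by apply: Hne; apply: spec_inj E Hx.
case: (ltnP (r i (t1.+1 %% p)) m) => Hx'; last first.
  by apply: Hne; apply: succ_mod_inj => //; apply: spec_inj E' Hx'.
apply: Hne; apply: (base_simple HD Hm H1 H2).
  exact: rb_eq E Hx.
exact: rb_eq E' Hx'.
Qed.

Definition sysR : PVsys 'I_N 'I_K :=
  @PVSys _ _ (fun _ => p) (fun (c : 'I_K) j => inord (r c j)).

Lemma p_pos : 0 < p. Proof. have := Kp; slia. Qed.

Lemma posv (c : 'I_K) t : val (pos sysR c t) = r c (t %% p).
Proof.
rewrite /pos /= inordK //; apply: rtn_lt => //; exact: ltn_pmod p_pos.
Qed.

Lemma sys_simple : simple_PV sysR.
Proof.
move=> c; split=> [i Hi|i j Hij Hj].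
  rewrite -(inj_eq val_inj) !posv /= (modn_small Hi).
  exact: rtn_simple1.
have Hi : i < p by apply: ltn_trans Hj.
move=> /(congr1 val); rewrite !posv /= (modn_small Hi) (modn_small Hj) => E.
rewrite -(inj_eq val_inj) !posv /=.
exact: rtn_simple2.
Qed.

Definition Inv t (x : 'I_N) := exists c : 'I_K, c * (p - 1) <= t /\ x = pos sysR c t.

Lemma inv_step t x c' : Inv t x -> pos sysR c' t = x -> Inv t.+1 (pos sysR c' t.+1).
Proof.
move=> [c [Hc ->]] E.
have Htp : t %% p < p by exact: ltn_pmod p_pos.
have Hp := Kp.
case: (eqVneq c' c) => [->|Hne]; first by exists c; split=> //; apply: leqW.
move: E => /(congr1 val); rewrite !posv => E.
have Hne' : val c' != val c by [].
case: (coincide (ltn_ord c') (ltn_ord c) Hne' Htp E) => [[E1 E2]|[E1 E2]].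
  exists c'; split=> //; apply: leqW; apply: leq_trans Hc.
  by rewrite leq_mul2r E1 leqnSn orbT.
exists c'; split=> //; apply: leqW; rewrite E1.
apply: mod_step => //.
by apply: ltn_trans (ltn_ord c) _.
Qed.

Lemma z_late t : Inv t ord_max -> K * (p - 1) <= t.
Proof.
move=> [c [Hc E]].
have Htp : t %% p < p by exact: ltn_pmod p_pos.
have Hp := Kp; have := P1.
move: E => /(congr1 val); rewrite posv /= => E.
have := rtn_val (ltn_ord c) Htp.
have Hc' := ltn_ord c.
have Hm : m <= n' by move: P1 => ?; slia.
rewrite -E => ? ?.
have [Ec Et] : (c : nat) = k' /\ t %% p = p - 1 - c by slia.
have := @mod_step p c t; rewrite Ec in Hc Et * => H.
by apply: H => //; slia.
Qed.

Lemma lower (sigma : strategy 'I_N 'I_K) : solves sysR sigma -> K * (p - 1) <= cost sysR sigma.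
Proof.
move=> Hs.
have Hst : pos sysR ord0 0 \in start sysR by apply/imsetP; exists ord0.
have [Hv Hall] := Hs _ Hst.
have := inv_trace (@inv_step) Hv _ (Hall ord_max).
case=> [|t' [Ht' Hinv]].
  by exists ord0; split.
apply: leq_trans (z_late Hinv) _.
apply: leq_trans (_ : size (sigma (pos sysR ord0 0)) <= _).
  by rewrite add0n in Ht'; case/andP: Ht'.
by apply: (leq_bigmax_cond (F := fun s => size (sigma s))) Hst.
Qed.

Fixpoint down (j : nat) : seq 'I_K := if j is j'.+1 then inord j :: down j' else [::].
Fixpoint up (j l : nat) : seq 'I_K :=
  if l is l'.+1 then nseq (p - 1) (inord j) ++ up j.+1 l' else [::].

Lemma size_down j : size (down j) = j.
Proof. by elim: j => //= j ->. Qed.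

Definition w j := pos sysR (inord j) (p - 1 - j).
Definition u j := pos sysR (inord j) (j * (p - 1)).

Lemma pm1 t : t < p -> t %% p = t. Proof. exact: modn_small. Qed.

Lemma w_val j : j.+1 < K -> val (w j) = m + j.
Proof.
move=> Hj; have Hp := Kp.
rewrite /w posv inordK; last by apply: ltn_trans Hj.
rewrite pm1; last by slia.
exact: rtn_W.
Qed.

Lemma u_val j : 0 < j -> j < K -> val (u j) = m + j - 1.
Proof.
move=> H0 Hj; have Hp := Kp.
rewrite /u posv inordK // jmod //; last by slia.
exact: rtn_W'.
Qed.

Lemma end_val j : 0 < j -> j < K -> val (pos sysR (inord j) (j.+1 * (p - 1))) =
  m + j.
Proof.
move=> H0 Hj; have Hp := Kp.
rewrite posv inordK // jmod //; last by slia.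
case: (ltnP j.+1 K) => Hj1; first by apply: rtn_W => //; slia.
have Ej : j = k' by slia.
have := rtn_Z (erefl (p - K)); rewrite subSS subn0 Ej => ->.
slia.
Qed.

Lemma head_mem (x : 'I_N) t cs : x \in trace sysR x t cs.
Proof. by case: cs => [|? ?]; rewrite inE eqxx. Qed.

Lemma down_ok j t : j.+1 < K -> t = p - 1 - j ->
  valid_from sysR (w j) t (down j) /\ fin sysR (w j) t (down j) = w 0.
Proof.
elim: j t => [|j IH] t Hj Ht; first by [].
have Hp := Kp.
have Hw : pos sysR (inord j.+1) t.+1 = w j.
  apply: val_inj; rewrite w_val; last by slia.
  rewrite posv inordK; last by slia.
  rewrite pm1; last by slia.
  rewrite (@rtn_W' j.+1 t.+1) //; slia.
have E : pos sysR (inord j.+1) t = w j.+1 by rewrite /w Ht.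
rewrite [down _]/= valid_cons fin_cons E eqxx andTb Hw; apply: IH; slia.
Qed.

Lemma up_ok l : forall j t, 0 < j -> j + l = K -> 0 < l -> t = j * (p - 1) ->
  valid_from sysR (u j) t (up j l) /\
  forall y : 'I_N, m + j - 1 <= y -> y \in trace sysR (u j) t (up j l).
Proof.
elim: l => [|l IH] j t H0 Hjl Hl Ht //.
have Hp := Kp; have HjK : j < K by slia.
have Eu : u j = pos sysR (inord j) t by rewrite /u Ht.
rewrite [up _ _]/= valid_cat Eu ride_valid ride_fin size_nseq andTb.
have Et : t + (p - 1) = j.+1 * (p - 1) by rewrite Ht mulSn addnC.
rewrite Et.
case: l IH Hjl Hl => [|l] IH Hjl Hl.
  split=> // y Hy.
  case: (ltnP y (m + j)) => Hy2.
    have -> : y = u j by apply: val_inj; rewrite u_val // [val y]/=; slia.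
    rewrite Eu; exact: head_mem.
  apply: trace_catl.
  have -> : y = pos sysR (inord j) (t + (p - 1)).
    apply: val_inj; rewrite Et end_val // [val y]/=.
    have := ltn_ord y; have := P1; slia.
  exact: ride_mem.
have Hf : pos sysR (inord j) (j.+1 * (p - 1)) = u j.+1.
  by apply: val_inj; rewrite end_val // u_val //; slia.
have [IH1 IH2] : valid_from sysR (u j.+1) (j.+1 * (p - 1)) (up j.+1 l.+1) /\
  (forall y : 'I_N, m + j.+1 - 1 <= y -> y \in trace sysR (u j.+1) (j.+1 * (p - 1)) (up j.+1 l.+1)).
  by apply: IH => //; slia.
rewrite Hf; split=> // y Hy.
case: (ltnP y (m + j)) => Hy2.
  have -> : y = u j by apply: val_inj; rewrite u_val // [val y]/=; slia.
  rewrite Eu; exact: head_mem.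
apply: trace_catr; rewrite ride_fin size_nseq Et Hf; apply: IH2; slia.
Qed.

Lemma X_cov (y : 'I_N) : y < m -> y \in trace sysR (u 1) (1 * (p - 1)) (up 1 k').
Proof.
move=> Hy; have Hp := Kp; have := P1 => HP.
have Eup : forall l, 0 < l -> up 1 l = nseq (p - 1) (inord 1) ++ up 2 l.-1 by case.
have Hk0 : 0 < k' by slia.
rewrite (Eup _ Hk0).
apply: trace_catl.
have Hm : 0 < m by slia.
set x := (y + (m - 1)) %% m.
have Hx : x < m by rewrite ltn_pmod.
have [tau [Ht Er]] : exists tau, tau < p - 2 /\ rbase m tau = x.
  case: (ltnP x (m - 1)) => Hx1.
    exists (2 * x); split; first by slia.
    by have := @r_even m 0 x Hx; rewrite mul0n add0n.
  exists (2 * (m - 3)).+1; split; first by slia.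
  have := @r_odd m 0 (m - 3); rewrite mul0n add0n => ->; last by slia.
  rewrite modn_small; slia.
have -> : y = pos sysR (inord 1) (1 * (p - 1) + tau.+1).
  apply: val_inj; rewrite posv inordK //.
  have -> : 1 * (p - 1) + tau.+1 = tau + p by slia.
  rewrite modnDr pm1; last by slia.
  rewrite (@rtn_X 1 tau) //; last by slia.
  rewrite Er /x modnDml.
  have -> : y + (m - 1) + 1 = y + m by slia.
  by rewrite modnDr modn_small.
apply: ride_mem; slia.
Qed.

Definition pre (c : 'I_K) : seq 'I_K :=
  if c == 0 :> nat then nseq (p - 1) c else nseq (p - c) c ++ down c.-1.

Lemma pre_ok (c : 'I_K) : valid_from sysR (pos sysR c 0) 0 (pre c) /\
  fin sysR (pos sysR c 0) 0 (pre c) = u 1 /\ size (pre c) = p - 1.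
Proof.
have Hp := Kp; have := P1 => HP.
have Hc := ltn_ord c.
rewrite /pre; case: eqP => Hc0.
  rewrite ride_valid ride_fin size_nseq; split=> //; split=> //.
  apply: val_inj; rewrite posv u_val // add0n pm1; last by slia.
  rewrite Hc0 (@rtn_W 0 (p - 1)) //; slia.
have Hw : pos sysR c (0 + (p - c)) = w c.-1.
  apply: val_inj; rewrite w_val; last by slia.
  rewrite posv add0n pm1; last by slia.
  rewrite (@rtn_W' c (p - c)) //; slia.
have [D1 D2] := @down_ok c.-1 (0 + size (nseq (p - c) c)) ltac:(slia)
  ltac:(rewrite size_nseq; slia).
rewrite valid_cat ride_valid ride_fin Hw D1; split=> //.
rewrite size_cat size_nseq size_down; split; last by slia.
rewrite fin_cat ride_fin Hw D2.
apply: val_inj; rewrite w_val ?u_val //; slia.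
Qed.

Lemma sys_feasible : feasible sysR.
Proof.
move=> c; exists (pre c ++ up 1 k').
have Hp := Kp; have := P1 => HP.
have [P1' [P2 P3]] := pre_ok c.
have [U1 U2] := @up_ok k' 1 (0 + size (pre c)) erefl ltac:(slia) ltac:(slia)
  ltac:(rewrite P3; slia).
split; first by rewrite valid_cat P1' P2.
move=> y; apply: trace_catr; rewrite P2.
case: (ltnP y m) => Hy; last by apply: U2; slia.
have -> : 0 + size (pre c) = 1 * (p - 1) by rewrite P3; slia.
exact: X_cov.
Qed.

End Rtn.


Import Order.TTheory GRing.Theory Num.Theory.

Lemma explores_pos (n' : nat) (C : finType) (R : PVsys 'I_n'.+2 C) s cs :
  explores R s cs -> 0 < size cs.
Proof.
case: cs => // [[_ Hall]].
have H0 := Hall ord0; have H1 := Hall ord_max.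
move: H0 H1; rewrite /= !inE => /eqP <- /eqP.
by move/(congr1 val).
Qed.

Section Small.
Variables (n' k' : nat).
Local Notation N := n'.+2.
Local Notation K := k'.+1.
Hypothesis HKN : K <= N.

Definition sysC : PVsys 'I_N 'I_K :=
  @PVSys _ _ (fun _ => N) (fun (c : 'I_K) j => inord ((j + c) %% N)).

Lemma posC (c : 'I_K) t : val (pos sysC c t) = (t %% N + c) %% N.
Proof. by rewrite /pos /= inordK ?ltn_pmod. Qed.

Lemma sysC_simple : simple_PV sysC.
Proof.
move=> c; split=> [i Hi|i j Hij Hj].
  rewrite -(inj_eq val_inj) !posC (modn_small Hi) modnDml; apply/eqP.
  rewrite addSn => E.
  have : (i + c + 0) %% N = (i + c + 1) %% N by rewrite addn0 addn1.
  by move/modcancel; rewrite !modn_small.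
have Hi : i < N by apply: ltn_trans Hj.
move=> /(congr1 val); rewrite !posC (modn_small Hi) (modn_small Hj) ![_ + c]addnC.
move/modcancel; rewrite !modn_small // => E.
by rewrite E ltnn in Hij.
Qed.

Lemma sysC_feasible : feasible sysC.
Proof.
move=> c; exists (nseq N.-1 c); split; first exact: ride_valid.
move=> y.
have Hc : c <= N by apply: leq_trans HKN; apply: ltnW.
have -> : y = pos sysC c (0 + (y + N - c) %% N).
  apply: val_inj; rewrite posC add0n modn_mod modnDml.
  have -> : y + N - c + c = y + N by rewrite subnK // (leq_trans Hc (leq_addl _ _)).
  by rewrite modnDr modn_small.
apply: ride_mem.
have := @ltn_pmod (y + N - c) N isT; by [].
Qed.
End Small.

Unset Implicit Arguments.
Theorem mainTheorem5 (n k : nat) :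
  4 <= n -> 2 <= k -> k.*2 <= n ->
  exists R : PVsys 'I_n 'I_k,
    [/\ well_formed R, homogeneous R, simple_PV R, feasible R &
        forall sigma : strategy 'I_n 'I_k, solves R sigma ->
          ((k * n)%:Z * (n%:Z - 8) < (8 * cost R sigma)%:Z)%R].
Proof.
case: n => [//|[//|n']] H4; case: k => [//|k'] Hk Hk2.
case: (leqP n'.+2 8) => Hn.
  have HKN : k'.+1 <= n'.+2.
    by apply: leq_trans Hk2; rewrite -addnn leq_addl.
  exists (sysC n' k'); split=> //.
  - exact: sysC_simple.
  - exact: sysC_feasible.
  move=> sigma Hs.
  have Hst : pos (sysC n' k') ord0 0 \in start (sysC n' k') by apply/imsetP; exists ord0.
  have Hc : 0 < cost (sysC n' k') sigma.
    apply: leq_trans (explores_pos (Hs _ Hst)) _.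
    exact: (leq_bigmax_cond (F := fun s => size (sigma s))) Hst.
  apply: (@le_lt_trans _ _ 0%R).
    apply: mulr_ge0_le0; first by rewrite lez_nat.
    by rewrite subr_le0 lez_nat.
  by rewrite ltz_nat muln_gt0.
have H9 : 9 <= n'.+2 by [].
exists (sysR n'.+1 k'); split.
- move=> c; exact: p_pos.
- by [].
- exact: sys_simple.
- exact: sys_feasible.
move=> sigma Hs.
have Hl := lower H9 Hk Hk2 Hs.
have [_ [_ [_ [_ [_ [_ Hb]]]]]] := P1 H9 Hk Hk2.
have E8 : ((n'.+2)%:Z - 8 = (n'.+2 - 8)%:Z)%R by rewrite -subzn // ltnW.
rewrite E8 -PoszM ltz_nat.
apply: leq_trans (_ : k'.+1 * (8 * (pp n'.+2 k'.+1 - 1)) <= _).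
  by rewrite -mulnA ltn_pmul2l.
by rewrite mulnCA leq_mul2l Hl orbT.
Qed.
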